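(* Let $\mathfrak g$ be a Lie algebra with a Cartan subalgebra $\mathfrak h$ and a root decomposition with roots $\Delta$. Every $\mathbb R$-linear order $>$ on $\langle\Delta\rangle_{\mathbb R}$ determines a unique Borel subalgebra, namely $\mathfrak h\oplus\bigoplus_{\alpha\in\Delta^+}\mathfrak g^\alpha$ with $\Delta^\pm:=\{\alpha\in\Delta:\pm\alpha>0\}$; conversely, every Borel subalgebra of $\mathfrak g$ (containing $\mathfrak h$) is determined in this way by some (in general not unique) $\mathbb R$-linear order on $\langle\Delta\rangle_{\mathbb R}$.
   Context: Over $\mathbb C$. A Cartan subalgebra is a self-normalizing nilpotent subalgebra $\mathfrak h$; a root decomposition is $\mathfrak g=\mathfrak h\oplus\bigoplus_{\alpha\in\mathfrak h^*\setminus\{0\}}\mathfrak g^\alpha$ with $\mathfrak g^\alpha$ the generalized weight spaces, $\Delta=\{\alpha\ne0:\mathfrak g^\alpha\ne0\}$, and $\langle\Delta\rangle_{\mathbb R}$ the real span of $\Delta$ in $\mathfrak h^*$. A decomposition $\Delta=\Delta^+\sqcup\Delta^-$ is triangular if the cone $\langle\Delta^+\cup-\Delta^-\rangle_{\mathbb R_+}$ contains no nonzero real vector subspace; a Borel subalgebra is $\mathfrak h\oplus\bigoplus_{\alpha\in\Delta^+}\mathfrak g^\alpha$ for a triangular decomposition. An $\mathbb R$-linear order on a real vector space is a total order compatible with addition and with multiplication by positive reals (multiplication by negative reals reversing it). *)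

(* Defs.v *)
From HB Require Import structures.
From mathcomp Require Import all_boot all_order all_algebra.
From mathcomp Require Import reals.
From mathcomp.real_closed Require Export complex.
Unset Printing Implicit Defensive.
Import Order.TTheory GRing.Theory Num.Theory.
Local Open Scope ring_scope.

Section LieDefs.
Context {R : realType}.
Local Notation C := R[i].
Context {L : lmodType C}.
Variable br : L -> L -> L.

Definition lie_bracket : Prop :=
  [/\ (forall (a : C) x y z, br (a *: x + y) z = a *: br x z + br y z),
      (forall (a : C) x y z, br z (a *: x + y) = a *: br z x + br z y),
      (forall x, br x x = 0) &
      (forall x y z, br x (br y z) + br y (br z x) + br z (br x y) = 0)].

Variable H : L -> Prop.

Definition subalgebra : Prop :=
  [/\ H 0, (forall (a : C) x y, H x -> H y -> H (a *: x + y)) &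
      (forall x y, H x -> H y -> H (br x y))].

Fixpoint all_in (xs : seq L) : Prop :=
  if xs is y :: ys then H y /\ all_in ys else True.

(* nilpotent: some term H^{n+1} of the lower central series
   (H^1 = H, H^{k+1} = [H, H^k]) vanishes, i.e. all brackets
   [x_1,[x_2,...,[x_n, x]]] of n+1 elements of H are 0. *)
Definition nilpotent_sub : Prop :=
  exists n : nat, forall x xs, size xs = n -> H x -> all_in xs -> foldr br x xs = 0.

Definition self_normalizing : Prop :=
  forall x, (forall y, H y -> H (br x y)) -> H x.

Definition cartan : Prop := [/\ subalgebra, nilpotent_sub & self_normalizing].

Definition hT := {x : L | H x}.
Definition hfun := hT -> C.

Definition hdual (f : hfun) : Prop :=
  forall (a : C) (x y z : hT), proj1_sig z = a *: proj1_sig x + proj1_sig y ->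
    f z = a * f x + f y.

Definition fzero : hfun := fun _ => 0.
Definition fopp (f : hfun) : hfun := fun h => - f h.
Definition fadd (f g : hfun) : hfun := fun h => f h + g h.
Definition rscale (r : R) (f : hfun) : hfun := fun h => Complex r 0 * f h.
Definition rlincomb n (r : 'I_n -> R) (a : 'I_n -> hfun) : hfun :=
  fun h => \sum_(i < n) Complex (r i) 0 * a i h.

Definition gws (alpha : hfun) (x : L) : Prop :=
  forall h : hT, exists n : nat,
    iter n (fun v => br (proj1_sig h) v - alpha h *: v) x = 0.

(* root decomposition g = h (+) (+)_{alpha in h^* \ 0} g^alpha (internal direct sum) *)
Definition root_decomposition : Prop :=
  (forall x, exists x0 n (a : 'I_n -> hfun) (v : 'I_n -> L),
      [/\ H x0, (forall i, [/\ hdual (a i), a i <> fzero & gws (a i) (v i)]) &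
          x = x0 + \sum_(i < n) v i]) /\
  (forall x0 n (a : 'I_n -> hfun) (v : 'I_n -> L),
      H x0 -> injective a ->
      (forall i, [/\ hdual (a i), a i <> fzero & gws (a i) (v i)]) ->
      x0 + \sum_(i < n) v i = 0 -> x0 = 0 /\ forall i, v i = 0).

Definition roots (alpha : hfun) : Prop :=
  [/\ hdual alpha, alpha <> fzero & exists x, x <> 0 /\ gws alpha x].

Definition rspan (f : hfun) : Prop :=
  exists n (r : 'I_n -> R) (a : 'I_n -> hfun),
    (forall i, roots (a i)) /\ f = rlincomb n r a.

Definition tcone (Dp Dm : hfun -> Prop) (f : hfun) : Prop :=
  exists n (r : 'I_n -> R) (a : 'I_n -> hfun),
    (forall i, 0 <= r i /\ (Dp (a i) \/ Dm (fopp (a i)))) /\ f = rlincomb n r a.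

Definition real_subspace (V : hfun -> Prop) : Prop :=
  [/\ V fzero, (forall f g, V f -> V g -> V (fadd f g)) &
      (forall r f, V f -> V (rscale r f))].

Definition triangular (Dp Dm : hfun -> Prop) : Prop :=
  [/\ (forall alpha, roots alpha <-> (Dp alpha \/ Dm alpha)),
      (forall alpha, ~ (Dp alpha /\ Dm alpha)) &
      (forall V, real_subspace V -> (forall f, V f -> tcone Dp Dm f) ->
         forall f, V f -> f = fzero)].

Definition borel_of (Dp : hfun -> Prop) (x : L) : Prop :=
  exists x0 n (a : 'I_n -> hfun) (v : 'I_n -> L),
    [/\ H x0, (forall i, Dp (a i) /\ gws (a i) (v i)) & x = x0 + \sum_(i < n) v i].

Definition borel (B : L -> Prop) : Prop :=
  exists Dp Dm, triangular Dp Dm /\ forall x, B x <-> borel_of Dp x.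

Definition rlinear_order (V : hfun -> Prop) (le : hfun -> hfun -> Prop) : Prop :=
  [/\ (forall f, V f -> le f f),
      (forall f g, V f -> V g -> le f g -> le g f -> f = g),
      (forall f g k, V f -> V g -> V k -> le f g -> le g k -> le f k),
      (forall f g, V f -> V g -> le f g \/ le g f) &
    [/\ (forall f g k, V f -> V g -> V k -> le f g -> le (fadd f k) (fadd g k)),
      (forall r f g, V f -> V g -> 0 < r -> le f g -> le (rscale r f) (rscale r g)) &
      (forall r f g, V f -> V g -> r < 0 -> le f g -> le (rscale r g) (rscale r f))]].

Definition pos_roots (le : hfun -> hfun -> Prop) (alpha : hfun) : Prop :=
  roots alpha /\ (le fzero alpha /\ alpha <> fzero).
Definition neg_roots (le : hfun -> hfun -> Prop) (alpha : hfun) : Prop :=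
  roots alpha /\ (le fzero (fopp alpha) /\ fopp alpha <> fzero).

End LieDefs.

(* Main.v *)
Require Import Defs.
From HB Require Import structures.
From mathcomp Require Import all_boot all_order all_algebra.
From mathcomp Require Import reals.
From mathcomp.real_closed Require Import complex.
From mathcomp Require Import ring lra.
From Stdlib Require Import FunctionalExtensionality PropExtensionality Classical.
From mathcomp Require Import classical_sets.
Import Order.TTheory GRing.Theory Num.Theory.
Local Open Scope ring_scope.
Local Open Scope complex_scope.

Section S.
Variables (R : realType) (L : lmodType R[i]) (H : L -> Prop) (br : L -> L -> L).
Local Notation hf := (@hfun R L H).
Local Notation fadd := (@fadd R L H).
Local Notation fopp := (@fopp R L H).
Local Notation fzero := (@fzero R L H).
Local Notation rscale := (@rscale R L H).
Local Notation rlincomb := (@rlincomb R L H).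
Local Notation rspan := (@rspan R L br H).
Local Notation rts := (@Defs.roots R L br H).

Lemma hext (f g : hf) : (forall h, f h = g h) -> f = g.
Proof. exact: functional_extensionality. Qed.

Ltac pw := apply: hext => h; rewrite /Defs.fadd /Defs.fopp /Defs.rscale /Defs.fzero
  /Defs.rlincomb ?complexr0 ?(rmorphM, rmorphN, rmorphD, rmorphB, rmorph0, rmorph1) /=.

Definition catf T n m (f : 'I_n -> T) (g : 'I_m -> T) : 'I_(n + m) -> T :=
  fun i => match split i with inl j => f j | inr k => g k end.

Arguments catf {T n m}.

Lemma catfP T n m (f : 'I_n -> T) (g : 'I_m -> T) (P : T -> Prop) :
  (forall i, P (f i)) -> (forall i, P (g i)) -> forall i, P (catf f g i).
Proof. by move=> Pf Pg i; rewrite /catf; case: split. Qed.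

Lemma rlincomb0 r a : rlincomb 0 r a = fzero.
Proof. by pw; rewrite big_ord0. Qed.

Lemma rlincombS n r a : rlincomb n.+1 r a =
  fadd (rlincomb n (fun i => r (widen_ord (leqnSn n) i)) (fun i => a (widen_ord (leqnSn n) i)))
       (rscale (r ord_max) (a ord_max)).
Proof. by pw; rewrite big_ord_recr. Qed.

Lemma rlincomb_cat n m r1 a1 r2 a2 :
  fadd (rlincomb n r1 a1) (rlincomb m r2 a2) = rlincomb (n + m) (catf r1 r2) (catf a1 a2).
Proof.
pw; rewrite big_split_ord /catf; congr (_ + _); apply: eq_bigr => i _.
  by rewrite (unsplitK (inl _ i)).
by rewrite (unsplitK (inr _ i)).
Qed.

Lemma rlincomb_scale t n r a :
  rscale t (rlincomb n r a) = rlincomb n (fun i => t * r i) a.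
Proof.
pw; rewrite mulr_sumr; apply: eq_bigr => i _; rewrite ?complexr0 ?rmorphM /=; ring.
Qed.

Lemma rlincomb1 a : rlincomb 1 (fun _ => 1) (fun _ => a) = a.
Proof. by pw; rewrite big_ord1 ?complexr0 ?rmorph1 mul1r. Qed.

Lemma fadd0f f : fadd fzero f = f. Proof. by pw; rewrite add0r. Qed.
Lemma faddN f : fadd f (fopp f) = fzero. Proof. by pw; rewrite subrr. Qed.
Lemma faddNf f : fadd (fopp f) f = fzero. Proof. by pw; rewrite addNr. Qed.
Lemma rscalef0 r : rscale r fzero = fzero. Proof. by pw; rewrite mulr0. Qed.
Lemma rscale0f f : rscale 0 f = fzero. Proof. by pw; rewrite mul0r. Qed.
Lemma rscale1f f : rscale 1 f = f. Proof. by pw; rewrite mul1r. Qed.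
Lemma foppK f : fopp (fopp f) = f. Proof. by pw; rewrite opprK. Qed.
Lemma foppE f : fopp f = rscale (-1) f. Proof. by pw; ring. Qed.
Lemma fopp0 : fopp fzero = fzero. Proof. by pw; rewrite oppr0. Qed.
Lemma faddf0 f : fadd f fzero = f. Proof. by pw; rewrite addr0. Qed.

Definition cone (A : hf -> Prop) :=
  [/\ A fzero, (forall f g, A f -> A g -> A (fadd f g)) &
      (forall r f, 0 <= r -> A f -> A (rscale r f))].

Lemma tcone_ind Dp Dm (Q : hf -> Prop) : cone Q ->
  (forall a, Dp a \/ Dm (fopp a) -> Q a) -> forall f, tcone H Dp Dm f -> Q f.
Proof.
move=> [Q0 QD QZ] Qg f [n [r [a [Ha ->]]]].
elim: n r a Ha => [|n IH] r a Ha; first by rewrite rlincomb0.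
rewrite rlincombS; apply: QD; first by apply: IH => i; exact: Ha.
apply: QZ; first exact: (Ha ord_max).1.
by apply: Qg; exact: (Ha ord_max).2.
Qed.

Lemma tcone_cone Dp Dm : cone (tcone H Dp Dm).
Proof.
split.
- exists 0%N, (fun _ => 0), (fun _ => fzero); split; first by case.
  by rewrite rlincomb0.
- move=> f g [n [r [a [Ha ->]]]] [m [s [b [Hb ->]]]].
  exists (n + m)%N, (catf r s), (catf a b); split; last by rewrite rlincomb_cat.
  move=> i; rewrite /catf; case: split => j; [exact: Ha | exact: Hb].
- move=> t f t0 [n [r [a [Ha ->]]]].
  exists n, (fun i => t * r i), a; split; last by rewrite rlincomb_scale.
  by move=> i; split; [exact: mulr_ge0 (Ha i).1 | exact: (Ha i).2].
Qed.

Lemma tcone_gen Dp Dm a : Dp a \/ Dm (fopp a) -> tcone H Dp Dm a.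
Proof.
move=> Ha; exists 1%N, (fun _ => 1), (fun _ => a); split; last by rewrite rlincomb1.
by move=> i; split.
Qed.

Lemma rspan0 : rspan fzero.
Proof. exists 0%N, (fun _ => 0), (fun _ => fzero); split; first by case. by rewrite rlincomb0. Qed.

Lemma rspanD f g : rspan f -> rspan g -> rspan (fadd f g).
Proof.
move=> [n [r [a [Ha ->]]]] [m [s [b [Hb ->]]]].
exists (n + m)%N, (catf r s), (catf a b); split; last by rewrite rlincomb_cat.
exact: catfP.
Qed.

Lemma rspanZ t f : rspan f -> rspan (rscale t f).
Proof.
move=> [n [r [a [Ha ->]]]]; exists n, (fun i => t * r i), a; split => //.
by rewrite rlincomb_scale.
Qed.

Lemma rspanN f : rspan f -> rspan (fopp f).
Proof. by rewrite foppE; apply: rspanZ. Qed.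

Lemma rspan_root a : rts a -> rspan a.
Proof. move=> Ha; exists 1%N, (fun _ => 1), (fun _ => a); split => //. by rewrite rlincomb1. Qed.


Lemma part1 le : rlinear_order H rspan le ->
  triangular br H (pos_roots br H le) (neg_roots br H le).
Proof.
move=> [refl anti trans tot [addc scp scn]].
have le_add0 f g : rspan f -> rspan g -> le fzero f -> le fzero g -> le fzero (fadd f g).
  move=> Vf Vg lf lg; have V0 := rspan0.
  have := addc _ _ g V0 Vf Vg lf; rewrite fadd0f => h.
  exact: (trans _ _ _ rspan0 Vg (rspanD _ _ Vf Vg) lg h).
have le_sc f r : 0 <= r -> rspan f -> le fzero f -> le fzero (rscale r f).
  move=> r0 Vf lf; case: (ltrgtP r 0) r0 => // [r0 _|-> _].
    by have := scp _ _ _ rspan0 Vf r0 lf; rewrite rscalef0.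
  by rewrite rscale0f; apply: refl; exact: rspan0.
have le_neg f : rspan f -> le fzero f -> le fzero (fopp f) -> f = fzero.
  move=> Vf l1 l2; have := addc _ _ f rspan0 (rspanN _ Vf) Vf l2.
  by rewrite fadd0f faddNf => l3; apply: anti => //; exact: rspan0.
have le_tot f : rspan f -> le fzero f \/ le fzero (fopp f).
  move=> Vf; case: (tot _ _ rspan0 Vf) => l; [by left | right].
  by have := addc _ _ (fopp f) Vf rspan0 (rspanN _ Vf) l; rewrite faddN fadd0f.
pose Q f := rspan f /\ le fzero f.
have QC : cone Q.
  split.
  - by split; [exact: rspan0 | apply: refl; exact: rspan0].
  - by move=> f g [Vf lf] [Vg lg]; split; [exact: rspanD | exact: le_add0].
  - by move=> r f r0 [Vf lf]; split; [exact: rspanZ | exact: le_sc].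
have QK f : tcone H (pos_roots br H le) (neg_roots br H le) f -> Q f.
  apply: tcone_ind => // a [[Ra [la _]] | [Ra [la _]]].
    by split => //; exact: rspan_root.
  by rewrite foppK in la; split => //; rewrite -[a]foppK; apply: rspanN; exact: rspan_root.
split.
- move=> a; split; last by case=> -[].
  move=> Ra; have [_ a0 _] := Ra.
  case: (le_tot a (rspan_root _ Ra)) => l; [left | right]; split => //.
  split => // e; apply: a0; by rewrite -[a]foppK e fopp0.
- move=> a [[Ra [l1 _]] [_ [l2 _]]]; have [_ a0 _] := Ra.
  by apply: a0; apply: le_neg => //; exact: rspan_root.
- move=> V [V0 VD VZ] VK f Vf.
  have Vn : V (fopp f) by rewrite foppE; apply: VZ.
  have [Vf' l1] := QK _ (VK _ Vf); have [_ l2] := QK _ (VK _ Vn).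
  exact: le_neg.
Qed.


Definition pointed (A : hf -> Prop) := forall f, A f -> A (fopp f) -> f = fzero.

Lemma max_cone (K : hf -> Prop) : cone K -> pointed K ->
  exists P, [/\ cone P, pointed P, (forall f, K f -> P f) & forall v, P v \/ P (fopp v)].
Proof.
move=> cK pK.
pose good (A : hf -> Prop) := [/\ cone A, pointed A & forall f, K f -> A f].
pose PP := fun A : set hf => A = set0 \/ good A.
have gK : good K by split.
have [] := @Zorn_bigcup hf PP.
  move=> F FP Ftot.
  have memg X f : F X -> X f -> good X.
    by move=> FX Xf; case: (FP X FX) => // e; rewrite e in Xf.
  case: (classic (exists X, F X /\ good X)) => [[X0 [FX0 gX0]]|nX]; last first.
    left; apply: functional_extensionality => f; apply: propositional_extensionality.
    split=> // -[X FX Xf]; apply: nX; exists X; split => //; exact: memg Xf.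
  right; have [[c0 _ _] _ KX0] := gX0.
  have two X Y f g : F X -> F Y -> X f -> Y g ->
      exists Z, [/\ good Z, Z f & Z g] /\ F Z.
    move=> FX FY Xf Yg; case: (Ftot X Y FX FY) => sub.
      by exists Y; split => //; split; [exact: memg Yg | exact: sub | exact: Yg].
    by exists X; split => //; split; [exact: memg Xf | exact: Xf | exact: sub].
  split; [split|..].
  - by exists X0.
  - move=> f g [X FX Xf] [Y FY Yg].
    have [Z [[[[_ ZD _] _ _] Zf Zg] FZ]] := two _ _ _ _ FX FY Xf Yg.
    by exists Z => //; apply: ZD.
  - move=> r f r0 [X FX Xf]; have [[_ _ XZ] _ _] := memg _ _ FX Xf.
    by exists X => //; apply: XZ.
  - move=> f [X FX Xf] [Y FY Yg].
    have [Z [[[_ pZ _] Zf Zg] FZ]] := two _ _ _ _ FX FY Xf Yg.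
    exact: pZ.
  - by move=> f Kf; exists X0 => //; apply: KX0.
move=> A [PA Amax].
have gA : good A.
  case: PA => // A0; exfalso; apply: (Amax K); last by right.
  rewrite A0; split => // sub; have [K0 _ _] := cK; exact: (sub _ K0).
have [[A0 AD AZ] pA KA] := gA.
exists A; split => // v; apply: NNPP => nv.
have nv1 : ~ A v by move=> ?; apply: nv; left.
have nv2 : ~ A (fopp v) by move=> ?; apply: nv; right.
pose B f := exists p t, [/\ A p, 0 <= t & f = fadd p (rscale t v)].
have AB f : A f -> B f.
  by move=> Af; exists f, 0; split => //; rewrite rscale0f faddf0.
apply: (Amax B); last first.
  right; split; [split|..].
  - exact: AB.
  - move=> f g [p [t [Ap t0 ->]]] [q [s [Aq s0 ->]]].
    exists (fadd p q), (t + s); split; [exact: AD | exact: addr_ge0 |].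
    by pw; ring.
  - move=> r f r0 [p [t [Ap t0 ->]]]; exists (rscale r p), (r * t); split.
    + exact: AZ.
    + exact: mulr_ge0.
    + by pw; ring.
  - move=> f [p [t [Ap t0 Ef]]] [q [s [Aq s0 En]]].
    have ep h : p h = f h - (t%:C * v h).
      by have := congr1 (fun F => F h) Ef; rewrite /Defs.fadd /Defs.rscale complexr0 => ->; ring.
    have eq h : q h = - f h - (s%:C * v h).
      by have := congr1 (fun F => F h) En; rewrite /Defs.fadd /Defs.fopp /Defs.rscale complexr0 => ->; ring.
    case: (eqVneq (t + s) 0) => ts; last first.
      have {}ts : 0 < t + s by rewrite lt_def ts addr_ge0.
      exfalso; apply: nv2.
      have -> : fopp v = rscale (t + s)^-1 (fadd p q).
        apply: hext => h; rewrite /Defs.fadd /Defs.fopp /Defs.rscale complexr0 ep eq.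
        have k : ((t + s)^-1)%:C * (t + s)%:C = 1.
          by rewrite -rmorphM mulVf ?rmorph1 // gt_eqF.
        rewrite (_ : _ - _ + _ = - ((t + s)%:C * v h)); last by rewrite rmorphD /=; ring.
        by rewrite mulrN mulrA k mul1r.
      by apply: AZ => //; [rewrite invr_ge0 ltW | apply: AD].
    have t0' : t = 0 by lra.
    have s0' : s = 0 by lra.
    have eqp : q = fopp p.
      by apply: hext => h; rewrite eq /Defs.fopp ep t0' s0' rmorph0 !mul0r !subr0.
    rewrite eqp in Aq; have p0 := pA _ Ap Aq.
    by rewrite Ef p0 fadd0f t0' rscale0f.
  - by move=> f Kf; apply: AB; apply: KA.
split; first exact: AB.
move=> sub; apply: nv1; apply: sub; exists fzero, 1; split => //.
by rewrite rscale1f fadd0f.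
Qed.


Lemma part2 Dp Dm : triangular br H Dp Dm ->
  exists le, rlinear_order H rspan le /\ forall a, Dp a <-> pos_roots br H le a.
Proof.
move=> [tr1 tr2 tr3].
pose K := tcone H Dp Dm.
have cK : cone K := tcone_cone Dp Dm.
have [K0 KD KZ] := cK.
have pK : pointed K.
  move=> f Kf Kn; pose V g := exists t, g = rscale t f.
  apply: (tr3 V) => //; last by exists 1; rewrite rscale1f.
    split.
    - by exists 0; rewrite rscale0f.
    - by move=> g1 g2 [t ->] [s ->]; exists (t + s); pw; ring.
    - by move=> r g [t ->]; exists (r * t); pw; ring.
  move=> g [t ->]; case: (lerP 0 t) => t0; first exact: KZ.
  have -> : rscale t f = rscale (- t) (fopp f) by pw; ring.
  by apply: KZ => //; lra.
have [A [[A0 AD AZ] pA KA totA]] := max_cone _ cK pK.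
exists (fun f g => A (fadd g (fopp f))); split.
  split.
  - by move=> f _; rewrite faddN.
  - move=> f g _ _ l1 l2.
    have e : fadd g (fopp f) = fzero.
      by apply: pA => //; rewrite (_ : fopp _ = fadd f (fopp g)) //; pw; ring.
    apply: hext => h; have := congr1 (fun F => F h) e.
    by rewrite /Defs.fadd /Defs.fopp /Defs.fzero => /eqP; rewrite subr_eq0 => /eqP.
  - move=> f g k _ _ _ l1 l2.
    by rewrite (_ : fadd k _ = fadd (fadd k (fopp g)) (fadd g (fopp f))); [apply: AD | pw; ring].
  - move=> f g _ _; case: (totA (fadd g (fopp f))) => l; [by left | right].
    by rewrite (_ : fadd f _ = fopp (fadd g (fopp f))) //; pw; ring.
  split.
  - move=> f g k _ _ _ l.
    by rewrite (_ : fadd (fadd g k) _ = fadd g (fopp f)) //; pw; ring.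
  - move=> r f g _ _ r0 l.
    rewrite (_ : fadd (rscale r g) _ = rscale r (fadd g (fopp f))); last by pw; ring.
    by apply: AZ => //; exact: ltW.
  - move=> r f g _ _ r0 l.
    rewrite (_ : fadd (rscale r f) _ = rscale (- r) (fadd g (fopp f))); last by pw; ring.
    by apply: AZ => //; lra.
move=> a; split.
  move=> Da; have Ra : rts a by apply/tr1; left.
  have [_ a0 _] := Ra; split => //; split => //.
  by rewrite fopp0 faddf0; apply: KA; apply: tcone_gen; left.
move=> [Ra [l a0]]; case: (proj1 (tr1 a) Ra) => // Dma; exfalso; apply: a0.
rewrite fopp0 faddf0 in l; apply: pA => //; apply: KA; apply: tcone_gen.
by right; rewrite foppK.
Qed.

End S.

Lemma borel_of_ext (R : realType) (L : lmodType R[i]) (br : L -> L -> L)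
  (H : L -> Prop) P Q : (forall a, P a -> Q a) -> forall x, borel_of br H P x -> borel_of br H Q x.
Proof.
move=> PQ x [x0 [n [a [v [Hx0 Hi ->]]]]]; exists x0, n, a, v; split => // i.
by have [? ?] := Hi i; split => //; apply: PQ.
Qed.

Theorem proposition9 (R : realType) (L : lmodType R[i]) (br : L -> L -> L)
    (H : L -> Prop) :
  lie_bracket br -> cartan br H -> root_decomposition br H ->
  (forall le, rlinear_order H (rspan br H) le ->
     triangular br H (pos_roots br H le) (neg_roots br H le) /\
     borel br H (borel_of br H (pos_roots br H le))) /\
  (forall B, borel br H B ->
     exists le, rlinear_order H (rspan br H) le /\
       forall x, B x <-> borel_of br H (pos_roots br H le) x).
Proof.
move=> _ _ _; split.
  move=> le Hle; have tr := @part1 R L H br le Hle; split => //.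
  by exists (pos_roots br H le), (neg_roots br H le); split.
move=> B [Dp [Dm [tr HB]]].
have [le [Hle E]] := @part2 R L H br Dp Dm tr.
exists le; split => // x; rewrite HB; split; apply: borel_of_ext => a; apply E.
Qed.
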